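(* Let $\mathbf{X},\mathbf{Y}$ be s$\mathcal{H}$rms. A map $\mathbf{Z}:[0,T]^2\to G(\mathcal{H})$ coincides with $\mathbf{X}\boxplus\mathbf{Y}$ if and only if $\mathbf{Z}_{s,t}=\mathbf{Z}_{s,u}\star\mathbf{Z}_{u,t}$ for all $s,u,t\in[0,T]$ and, for every $s\in[0,T]$, $$\mathbf{Z}_{s,t}=\mathbf{X}_{s,t}\star\mathbf{Y}_{s,t}+R_{s,t}$$ for some $R_{s,t}\in\mathcal{H}'$ with $\langle R_{s,t},x\rangle=o(|t-s|)$ as $t\to s$ for all $x\in\mathcal{H}$. Moreover $$\mathbf{X}_{s,t}\star\mathbf{Y}_{s,t}=\mathbf{Y}_{s,t}\star\mathbf{X}_{s,t}+r_{s,t}=\mathbf{X}_{s,t}+\mathbf{Y}_{s,t}-\mathbf{1}^*+r'_{s,t}$$ for some $r_{s,t},r'_{s,t}\in\mathcal{H}'$ with $\langle r_{s,t},x\rangle,\langle r'_{s,t},x\rangle=o(|t-s|)$ as $t\to s$ for all $x\in\mathcal{H}$.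
   Context: Fix $T>0$. $(\mathcal{H},\cdot,\Delta)$: connected, $\mathbb{N}$-graded, locally finite commutative Hopf algebra over $\mathbb{R}$ ($\mathcal{H}=\bigoplus_n\mathcal{H}_n$, $\dim\mathcal{H}_n<\infty$, $\mathcal{H}_0=\mathbb{R}\mathbf{1}$), counit $\mathbf{1}^*$. $\mathcal{H}'=\mathrm{Hom}(\mathcal{H},\mathbb{R})$ with pointwise topology and product $\langle\alpha\star\beta,h\rangle=\langle\alpha\otimes\beta,\Delta h\rangle$ (unit $\mathbf{1}^*$). $G(\mathcal{H})\subset\mathcal{H}'$: characters ($\alpha(hk)=\alpha(h)\alpha(k)$, $\alpha(\mathbf{1})=1$), a group under $\star$; $\mathfrak{g}(\mathcal{H})$: infinitesimal characters ($\alpha(hk)=\alpha(h)\mathbf{1}^*(k)+\mathbf{1}^*(h)\alpha(k)$). s$\mathcal{H}$rm: non-zero map $\mathbf{X}:[0,T]^2\to\mathcal{H}'$ with $\mathbf{X}_{s,t}\in G(\mathcal{H})$, $\mathbf{X}_{s,u}\star\mathbf{X}_{u,t}=\mathbf{X}_{s,t}$, and $t\mapsto\langle\mathbf{X}_{s,t},h\rangle$ smooth for all $h$ and $s$. Diagonal derivative $\dot{\mathbf{X}}_{s,s}=\partial_t|_{t=s}\mathbf{X}_{s,t}\in\mathfrak{g}(\mathcal{H})$. For a smooth $\eta:[0,T]\to\mathfrak{g}(\mathcal{H})$ the equation $\dot\gamma(t)=\gamma(t)\star\eta(t)$, $\gamma(0)=\mathbf{1}^*$, has a unique smooth solution (the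 Cartan development). The canonical sum $\mathbf{X}\boxplus\mathbf{Y}$ is the s$\mathcal{H}$rm $(s,t)\mapsto\mathbf{Z}_s^{-1}\star\mathbf{Z}_t$, where $\mathbf{Z}$ is the Cartan development of $t\mapsto\dot{\mathbf{X}}_{t,t}+\dot{\mathbf{Y}}_{t,t}$. *)

(* Defs.v *)
From HB Require Import structures.
From mathcomp Require Import all_boot all_order all_algebra.
From mathcomp Require Import all_classical all_reals all_analysis.
Set Implicit Arguments. Unset Strict Implicit. Unset Printing Implicit Defensive.
Import Order.TTheory GRing.Theory Num.Theory.
Import numFieldNormedType.Exports.
Local Open Scope classical_set_scope.
Local Open Scope ring_scope.

Section HopfDefs.
Variables (R : realType) (H : comAlgType R).

(** Linear functionals H -> R; the algebraic dual H' is the set of these. *)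
Definition linR (f : H -> R) : Prop :=
  forall (a : R) (x y : H), f (a *: x + y) = a * f x + f y.

(** An element of H (x) H is represented (non-uniquely) by a finite list of
    simple tensors  sum_i a_i (x) b_i.  Its pairing with f (x) g: *)
Definition pair2 (f g : H -> R) (s : seq (H * H)) : R :=
  \sum_(p <- s) f p.1 * g p.2.

(** Two lists represent the same tensor iff they pair equally with all
    f (x) g, f g linear (true over a field). *)
Definition same_tensor (s1 s2 : seq (H * H)) : Prop :=
  forall f g, linR f -> linR g -> pair2 f g s1 = pair2 f g s2.

(** Connected, N-graded, locally finite, commutative Hopf algebra over R,
    whose underlying commutative R-algebra is H. *)
Record cgHopf := CgHopf {
  cop : H -> seq (H * H);          (* coproduct, in Sweedler form *)
  eps : H -> R;                    (* counit 1^* *)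
  antipode : H -> H;
  grade : nat -> set H;
  cop_lin : forall (a : R) (x y : H),
    same_tensor (cop (a *: x + y))
                ([seq (a *: p.1, p.2) | p <- cop x] ++ cop y);
  cop_coassoc : forall (h : H) (f g k : H -> R), linR f -> linR g -> linR k ->
    \sum_(p <- cop h) f p.1 * pair2 g k (cop p.2)
    = \sum_(p <- cop h) pair2 f g (cop p.1) * k p.2;
  eps_lin : linR eps;
  counit_l : forall h, \sum_(p <- cop h) eps p.1 *: p.2 = h;
  counit_r : forall h, \sum_(p <- cop h) eps p.2 *: p.1 = h;
  cop_mul : forall x y : H,
    same_tensor (cop (x * y))
                [seq (p.1 * q.1, p.2 * q.2) | p <- cop x, q <- cop y];
  cop_one : same_tensor (cop 1) [:: (1, 1)];
  eps_mul : forall x y : H, eps (x * y) = eps x * eps y;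
  eps_one : eps 1 = 1;
  antipode_lin : forall (a : R) (x y : H),
    antipode (a *: x + y) = a *: antipode x + antipode y;
  antipode_l : forall h, \sum_(p <- cop h) antipode p.1 * p.2 = eps h *: 1;
  antipode_r : forall h, \sum_(p <- cop h) p.1 * antipode p.2 = eps h *: 1;
  grade_subspace : forall n, grade n 0 /\
    (forall (a : R) (x y : H), grade n x -> grade n y -> grade n (a *: x + y));
  grade_finite : forall n, exists s : seq H,
    (forall x, x \in s -> grade n x) /\
    (forall h, grade n h -> exists c : 'I_(size s) -> R,
        h = \sum_(i < size s) c i *: s`_i);
  grade_span : forall h : H, exists (N : nat) (c : nat -> H),
    (forall n, grade n (c n)) /\ h = \sum_(n < N) c n;
  grade_direct : forall (N : nat) (c : nat -> H),
    (forall n, grade n (c n)) -> \sum_(n < N) c n = 0 ->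
    forall n, (n < N)%N -> c n = 0;
  grade_mul : forall m n (x y : H), grade m x -> grade n y -> grade (m + n) (x * y);
  grade_connected : grade 0 = [set a *: (1 : H) | a in [set: R]];
  grade_cop : forall n h, grade n h ->
    exists s : seq (nat * (H * H)),
      same_tensor (cop h) (map snd s) /\
      (forall q, q \in s -> (q.1 <= n)%N /\ grade q.1 q.2.1 /\ grade (n - q.1) q.2.2);
  grade_eps : forall n h, (0 < n)%N -> grade n h -> eps h = 0
}.

Variable hA : cgHopf.

Definition hconv (a b : H -> R) : H -> R := fun h => pair2 a b (cop hA h).

Definition is_char (a : H -> R) : Prop :=
  linR a /\ (forall x y, a (x * y) = a x * a y) /\ a 1 = 1.
Definition is_infchar (a : H -> R) : Prop :=
  linR a /\ (forall x y, a (x * y) = a x * eps hA y + eps hA x * a y).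

Definition char_inv (a : H -> R) : H -> R := fun h => a (antipode hA h).

End HopfDefs.

Section Calculus.
Variable R : realType.

Definition inI (T x : R) : Prop := 0 <= x <= T.

(** f has derivative l at x, within [0,T] (one-sided at the endpoints). *)
Definition has_deriv_on (T : R) (f : R -> R) (x l : R) : Prop :=
  (fun y => (f y - f x) / (y - x)) @ within (inI T) (x^') --> l.

Definition smooth_on (T : R) (f : R -> R) : Prop :=
  exists F : nat -> R -> R, F 0%N = f /\
    forall k x, inI T x -> has_deriv_on T (F k) x (F k.+1 x).

Definition small_o (T s : R) (f : R -> R) : Prop :=
  (fun t => f t / `|t - s|) @ within (inI T) (s^') --> (0 : R).

End Calculus.

Section Rough.
Variables (R : realType) (H : comAlgType R) (hA : cgHopf H) (T : R).

Definition is_srm (X : R -> R -> H -> R) : Prop :=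
  (exists s t, inI T s /\ inI T t /\ X s t <> (fun _ => 0)) /\
  (forall s t, inI T s -> inI T t -> is_char (X s t)) /\
  (forall s u t, inI T s -> inI T u -> inI T t -> hconv hA (X s u) (X u t) = X s t) /\
  (forall s h, inI T s -> smooth_on T (fun t => X s t h)).

Definition cartan_dev (eta gam : R -> H -> R) : Prop :=
  (forall t, inI T t -> linR (gam t)) /\
  gam 0 = eps hA /\
  (forall h, smooth_on T (fun t => gam t h)) /\
  (forall t h, inI T t -> has_deriv_on T (fun u => gam u h) t (hconv hA (gam t) (eta t) h)).

(** The diagonal
    derivatives dX t = d/du|_{u=t} X_{t,u} are given relationally (they are
    unique since limits in R are unique and T > 0); the Cartan development is
    unique, so "some" development = "the" development. *)
Definition is_boxplus (X Y Z : R -> R -> H -> R) : Prop :=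
  exists dX dY gam : R -> H -> R,
    (forall t h, inI T t -> has_deriv_on T (fun u => X t u h) t (dX t h)) /\
    (forall t h, inI T t -> has_deriv_on T (fun u => Y t u h) t (dY t h)) /\
    cartan_dev (fun t h => dX t h + dY t h) gam /\
    (forall s t, inI T s -> inI T t -> Z s t = hconv hA (char_inv hA (gam s)) (gam t)).

End Rough.

(* Main.v *)
Require Import Defs.
From HB Require Import structures.
From mathcomp Require Import all_boot all_order all_algebra.
From mathcomp Require Import all_classical all_reals all_analysis.
From mathcomp Require Import ring lra zify.
Import Order.TTheory GRing.Theory Num.Theory.
Import numFieldNormedType.Exports.
Set Implicit Arguments. Unset Strict Implicit. Unset Printing Implicit Defensive.
Local Open Scope classical_set_scope.
Local Open Scope ring_scope.


Section Calc.
Variables (R : realType) (T : R).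
Hypothesis hT : 0 < T.
Local Notation I := (inI T).

Lemma wIP (g : R -> R) x l :
  g @ within I x^' --> l <-> forall e, 0 < e -> exists2 d, 0 < d &
     forall y, I y -> y != x -> `|x - y| < d -> `|l - g y| < e.
Proof.
rewrite cvgrPdist_lt; split => H e e0; have := H e e0.
- rewrite /within /dnbhs /within => /nbhs_ballP [d d0 Hd]; exists d => //.
  move=> y Iy yx xy; apply: Hd => //; by rewrite -ball_normE /ball_.
- move=> [d d0 Hd]; rewrite /within /dnbhs /within; apply/nbhs_ballP.
  exists d => // y; rewrite -ball_normE /ball_ /= => xy yx Iy; exact: Hd.
Qed.

Lemma wI_proper x : I x -> ProperFilter (within I x^').
Proof.
move=> /andP[x0 xT].
apply: Build_ProperFilter_ex => P.
rewrite /within /dnbhs /within => /nbhs_ballP [d d0 Hd].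
have Hb y : `|x - y| < d -> y != x -> I y -> P y.
  by move=> h; apply: Hd; rewrite -ball_normE /ball_.
have [xlt|xge] := ltP x T.
- pose m := Num.min d (T - x).
  have m0 : 0 < m by rewrite lt_min d0 subr_gt0.
  have md : m <= d by rewrite ge_min lexx.
  have mT : m <= T - x by rewrite ge_min lexx orbT.
  exists (x + m / 2); apply: Hb.
  + rewrite opprD addrA subrr add0r normrN gtr0_norm; last by rewrite divr_gt0.
    rewrite ltr_pdivrMr // (le_lt_trans md) // ltr_pMr // ltr1n //.
  + rewrite -subr_eq0 addrC addKr mulf_eq0 negb_or gt_eqF //= invr_eq0 pnatr_eq0 //.
  + apply/andP; split; first by rewrite addr_ge0 // divr_ge0 // ltW.
    lra.
- have xe : x = T by apply/eqP; rewrite eq_le xT xge.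
  pose m := Num.min d T.
  have m0 : 0 < m by rewrite lt_min d0 hT.
  have md : m <= d by rewrite ge_min lexx.
  have mT : m <= T by rewrite ge_min lexx orbT.
  exists (x - m / 2); apply: Hb.
  + rewrite opprB addrC subrK gtr0_norm; last by rewrite divr_gt0.
    rewrite ltr_pdivrMr // (le_lt_trans md) // ltr_pMr // ltr1n //.
  + rewrite -subr_eq0 addrC addKr oppr_eq0 mulf_eq0 negb_or gt_eqF //= invr_eq0 pnatr_eq0 //.
  + apply/andP; split.
      lra.
    lra.
Qed.
#[local] Instance wIF x : Filter (within I x^') := within_filter _ _.
Definition dq (f : R -> R) x := fun y => (f y - f x) / (y - x).
Local Notation hd := (has_deriv_on T).

Lemma near_neq x : \forall y \near within I x^', y != x.
Proof. rewrite /within /dnbhs /within; apply/nbhs_ballP; exists 1; first exact: ltr01; move=> y _ h _; exact: h. Qed.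

Lemma near_I x : \forall y \near within I x^', I y.
Proof. rewrite /within /dnbhs /within; apply/nbhs_ballP; exists 1; first exact: ltr01; move=> y _ _ h; exact: h. Qed.

Lemma hd_near f x l G : (forall y, I y -> y != x -> G y = dq f x y) ->
  G @ within I x^' --> l -> hd f x l.
Proof.
move=> e H; rewrite /has_deriv_on; apply: cvg_trans H; apply: near_eq_cvg.
near=> y; apply: e; [near: y; exact: near_I|near: y; exact: near_neq].
Unshelve. all: by end_near. Qed.

Lemma hd_sub0 x : (fun y => y - x) @ within I x^' --> (0:R).
Proof.
apply/wIP => e e0; exists e => // y _ _ h.
by rewrite sub0r opprB.
Qed.

Lemma hd_cont f x l : hd f x l -> f @ within I x^' --> f x.
Proof.
move=> H.
have h : (fun y => f x + dq f x y * (y - x)) @ within I x^' --> f x + l * 0.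
  apply: cvgD; [exact: cvg_cst | exact: cvgM H (hd_sub0 x)].
move: h; rewrite mulr0 addr0 => h; apply: cvg_trans _ h; apply: near_eq_cvg.
near=> y.
have yx : y != x by near: y; exact: near_neq.
rewrite /= /dq divfK //; first by rewrite addrC subrK.
by rewrite subr_eq0.
Unshelve. all: by end_near. Qed.

Lemma hd_ext f g x l : I x -> (forall y, I y -> f y = g y) -> hd f x l -> hd g x l.
Proof.
move=> Ix e H; apply: hd_near H => y Iy yx; by rewrite /dq !e.
Qed.

Lemma hd_cst c x : hd (fun _ => c) x 0.
Proof.
apply: hd_near (cvg_cst _) => y _ _; by rewrite /dq subrr mul0r.
Qed.

Lemma hd_id x : hd (fun y => y) x 1.
Proof.
apply: hd_near (cvg_cst _) => y _ yx; rewrite /dq divff // subr_eq0 //.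
Qed.

Lemma hd_add f g x a b : hd f x a -> hd g x b -> hd (fun y => f y + g y) x (a + b).
Proof.
move=> Hf Hg; apply: (@hd_near _ _ _ (fun y => dq f x y + dq g x y)); last first.
  by apply: cvgD.
move=> y _ _.
by rewrite /dq /= -mulrDl opprD addrACA.
Qed.

Lemma hd_opp f x a : hd f x a -> hd (fun y => - f y) x (- a).
Proof.
move=> Hf; apply: (@hd_near _ _ _ (fun y => - dq f x y)); last first.
  by apply: cvgN.
move=> y _ _.
by rewrite /dq /= -mulNr opprB opprK addrC.
Qed.

Lemma hd_mul f g x a b : hd f x a -> hd g x b ->
  hd (fun y => f y * g y) x (a * g x + f x * b).
Proof.
move=> Hf Hg.
apply: (@hd_near _ _ _ (fun y => dq f x y * g y + f x * dq g x y)); last first.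
  apply: cvgD; first by apply: cvgM; [exact: Hf | exact: (hd_cont Hg)].
  exact: cvgMl_tmp.
move=> y _ yx.
have yx0 : y - x != 0 by rewrite subr_eq0.
rewrite /dq /=; field; done.
Qed.

Lemma hd_scal c f x a : hd f x a -> hd (fun y => c * f y) x (c * a).
Proof.
move=> Hf; have := hd_mul (hd_cst c x) Hf; rewrite mul0r add0r.
done.
Qed.

Lemma hd_sum (A : Type) (s : seq A) (F : A -> R -> R) (L : A -> R) x :
  (forall p, hd (F p) x (L p)) ->
  hd (fun y => \sum_(p <- s) F p y) x (\sum_(p <- s) L p).
Proof.
move=> H; elim: s => [|p s IH].
  rewrite big_nil; have -> : (fun y => \sum_(p <- [::]) F p y) = (fun _ => 0).
    by apply: funext => y; rewrite big_nil.
  exact: hd_cst.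
rewrite big_cons; have -> : (fun y => \sum_(q <- p :: s) F q y) =
   (fun y => F p y + \sum_(q <- s) F q y).
  by apply: funext => y; rewrite big_cons.
exact: hd_add.
Qed.

Lemma hd_unique f x a b : I x -> hd f x a -> hd f x b -> a = b.
Proof.
move=> Ix Ha Hb; have PF := wI_proper Ix.
exact: (cvg_unique _ Ha Hb).
Qed.

Lemma hd0_const f : (forall x, I x -> hd f x 0) -> forall t, I t -> f t = f 0.
Proof.
move=> H t /andP[t0 tT].
have [t00|tpos] := eqVneq t 0; first by rewrite t00.
have tp : 0 < t by rewrite lt_def tpos t0.
suff [c _] : exists2 c, c \in `]0, t[ & f t - f 0 = (fun _ => 0) c * (t - 0).
  by move=> /eqP; rewrite mul0r subr_eq0 => /eqP.
apply: MVT => //.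
- move=> x; rewrite in_itv /= => /andP[x0 xt].
  have Ix : I x by apply/andP; split; [exact: ltW | exact: (le_trans (ltW xt))].
  have Hl : (fun h => h^-1 *: ((f \o shift x) (h *: 1) - f x)) @ 0^' --> (0:R).
    apply/cvgrPdist_lt => e e0.
    have [d d0 Hd] := (wIP (dq f x) x 0).1 (H x Ix) e e0.
    pose m := Num.min d (Num.min x (T - x)).
    have m0 : 0 < m by rewrite !lt_min d0 x0 subr_gt0 (lt_le_trans xt tT).
    have md : m <= d by rewrite ge_min lexx.
    have mx : m <= x by rewrite !ge_min lexx orbT.
    have mT : m <= T - x by rewrite !ge_min lexx !orbT.
    rewrite /dnbhs /within; apply/nbhs_ballP; exists m => // h.
    rewrite -ball_normE /ball_ /= sub0r normrN => hm hne.
    have hb : - m < h < m by rewrite -ltr_norml.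
    case/andP: hb => hb1 hb2.
    have := Hd (h + x); rewrite /dq /= addrK mulrC scaler1 => -> //.
    + by apply/andP; split; lra.
    + by rewrite -subr_eq0 addrK.
    by rewrite opprD addrCA subrr addr0 normrN (lt_le_trans hm md).
  have PF : ProperFilter (0:R)^' := _.
  apply: DeriveDef; first by apply/cvg_ex; exists 0.
  exact: cvg_lim Hl.
- apply/subspace_continuousP => x; rewrite /= in_itv /= => /andP[x0 xt].
  have Ix : I x by apply/andP; split => //; exact: (le_trans xt).
  have := hd_cont (H x Ix); rewrite !cvgrPdist_lt => Hc e e0.
  have := Hc e e0; rewrite /within /dnbhs /within => /nbhs_ballP [d d0 Hd].
  apply/nbhs_ballP; exists d => // y Hy; rewrite /= in_itv /= => /andP[y0 yt].
  have [->|yx] := eqVneq y x; first by rewrite subrr normr0.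
  apply: Hd => //; apply/andP; split => //; exact: (le_trans yt).
Qed.

Definition Dv (f : R -> R) x := lim (dq f x @ within I x^').
Definition dI f := forall x, I x -> hd f x (Dv f x).
Definition Ck k f := forall j, (j < k)%N -> dI (iter j Dv f).
Definition Smooth f := forall k, dI (iter k Dv f).

Lemma hd_Dv f x l : I x -> hd f x l -> Dv f x = l.
Proof. move=> Ix H; have PF := wI_proper Ix; exact: cvg_lim H. Qed.

Lemma Dv_ext f g : (forall y, I y -> f y = g y) -> forall x, I x -> Dv f x = Dv g x.
Proof.
move=> e x Ix; rewrite /Dv; congr lim.
have E : {near within I x^', dq f x =1 dq g x}.
  near=> y; have Iy : I y by near: y; exact: near_I.
  by rewrite /dq !e.
apply/funext => A; apply/propext; split => h.
- exact: (near_eq_cvg E).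
- have E' : {near within I x^', dq g x =1 dq f x}.
    by apply: filterS E => y ->.
  exact: (near_eq_cvg E').
Unshelve. all: by end_near. Qed.

Lemma iter_ext f g : (forall y, I y -> f y = g y) ->
  forall k y, I y -> iter k Dv f y = iter k Dv g y.
Proof.
move=> e k; elim: k => [|k IH] y Iy /=; first exact: e.
exact: Dv_ext.
Qed.

Lemma dI_ext f g : (forall y, I y -> f y = g y) -> dI f -> dI g.
Proof.
move=> e H x Ix; rewrite -(Dv_ext e Ix); exact: hd_ext e (H x Ix).
Qed.

Lemma Ck_ext k f g : (forall y, I y -> f y = g y) -> Ck k f -> Ck k g.
Proof. move=> e H j jk; apply: dI_ext (H j jk); exact: iter_ext. Qed.

Lemma Ck_S k f : Ck k.+1 f <-> dI f /\ Ck k (Dv f).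
Proof.
split.
- move=> H; split; first exact: (H 0%N).
  by move=> j jk; rewrite -(iterSr j Dv f); apply: H.
- case=> H1 H2 [|j] jk //=; rewrite -(iterS j Dv f) iterSr; exact: H2.
Qed.

Lemma Ck_cst k c : Ck k (fun _ => c).
Proof.
elim: k c => [|k IH] c; first by [].
apply/Ck_S; split.
  move=> x Ix; rewrite (hd_Dv Ix (hd_cst c x)); exact: hd_cst.
apply: (@Ck_ext _ (fun _ => 0)) (IH 0) => y Iy.
by rewrite (hd_Dv Iy (hd_cst c y)).
Qed.

Lemma Ck_add k f g : Ck k f -> Ck k g -> Ck k (fun y => f y + g y).
Proof.
elim: k f g => [|k IH] f g; first by [].
move=> /Ck_S [df Cf] /Ck_S [dg Cg]; apply/Ck_S; split.
  move=> x Ix; have H := hd_add (df x Ix) (dg x Ix).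
  by rewrite (hd_Dv Ix H).
apply: Ck_ext (IH _ _ Cf Cg) => y Iy.
by rewrite (hd_Dv Iy (hd_add (df y Iy) (dg y Iy))).
Qed.

Lemma Ck_mul k f g : Ck k f -> Ck k g -> Ck k (fun y => f y * g y).
Proof.
elim: k f g => [|k IH] f g; first by [].
move=> Hf Hg; have Hf' := Hf; have Hg' := Hg.
move: Hf' Hg' => /Ck_S [df Cf] /Ck_S [dg Cg]; apply/Ck_S; split.
  move=> x Ix; have H := hd_mul (df x Ix) (dg x Ix).
  by rewrite (hd_Dv Ix H).
have Wf : Ck k f by move=> j jk; apply: Hf; exact: ltnW.
have Wg : Ck k g by move=> j jk; apply: Hg; exact: ltnW.
apply: Ck_ext (Ck_add (IH _ _ Cf Wg) (IH _ _ Wf Cg)) => y Iy.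
by rewrite (hd_Dv Iy (hd_mul (df y Iy) (dg y Iy))).
Qed.

Lemma Ck_sum k (A : Type) (s : seq A) (F : A -> R -> R) :
  (forall p, Ck k (F p)) -> Ck k (fun y => \sum_(p <- s) F p y).
Proof.
move=> H; elim: s => [|p s IHs].
  apply: Ck_ext (@Ck_cst k 0) => y _; by rewrite big_nil.
apply: Ck_ext (Ck_add (H p) IHs) => y _; by rewrite big_cons.
Qed.

Lemma SmoothP f : Smooth f <-> forall k, Ck k f.
Proof.
split; first by move=> H k j _; exact: H.
move=> H k; exact: (H k.+1 k).
Qed.

Lemma smooth_onP f : smooth_on T f <-> Smooth f.
Proof.
split.
- move=> [F [F0 HF]].
  have E : forall k y, I y -> iter k Dv f y = F k y.
    elim=> [|k IH] y Iy /=; first by rewrite F0.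
    rewrite (Dv_ext IH Iy); exact: hd_Dv (HF k y Iy).
  move=> k x Ix.
  have e : forall y, I y -> F k y = iter k Dv f y by move=> y Iy; rewrite E.
  apply: (hd_ext Ix e).
  rewrite -(Dv_ext e Ix) (hd_Dv Ix (HF k x Ix)); exact: HF.
- move=> H; exists (fun k => iter k Dv f); split => // k x Ix; exact: H.
Qed.

Lemma Smooth_Dv f : Smooth f -> Smooth (Dv f).
Proof. by move=> H k; rewrite -(iterSr k Dv f); exact: H. Qed.

Lemma bootstrap (A : Type) (fam G : A -> R -> R) :
  (forall a x, I x -> hd (fam a) x (G a x)) ->
  (forall k, (forall a, Ck k (fam a)) -> forall a, Ck k (G a)) ->
  forall a, Smooth (fam a).
Proof.
move=> Hd HG a; apply/SmoothP => k; elim: k a => [|k IH] a; first by [].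
apply/Ck_S; split.
  move=> x Ix; rewrite (hd_Dv Ix (Hd a x Ix)); exact: Hd.
apply: Ck_ext (HG k IH a) => y Iy; by rewrite (hd_Dv Iy (Hd a y Iy)).
Qed.

End Calc.


Section Hopf.
Variables (R : realType) (H : comAlgType R) (hA : cgHopf H).
Local Notation cop := (cop hA).
Local Notation eps := (eps hA).
Local Notation S := (antipode hA).
Local Notation conv := (hconv hA).

Section Lin.
Variable f : H -> R.
Hypothesis lf : linR f.
Lemma lin0 : f 0 = 0.
Proof. have := lf 1 0 0; rewrite scale1r addr0 mul1r => h; apply: (addrI (f 0)); by rewrite addr0 -h. Qed.
Lemma linD x y : f (x + y) = f x + f y.
Proof. by rewrite -[x in LHS]scale1r lf mul1r. Qed.
Lemma linZ a x : f (a *: x) = a * f x.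
Proof. by rewrite -[a *: x]addr0 lf lin0 addr0. Qed.
Lemma linN x : f (- x) = - f x.
Proof. by rewrite -scaleN1r linZ mulN1r. Qed.
Lemma linB x y : f (x - y) = f x - f y.
Proof. by rewrite linD linN. Qed.
Lemma lin_sum (A : Type) (s : seq A) (F : A -> H) :
  f (\sum_(p <- s) F p) = \sum_(p <- s) f (F p).
Proof.
elim: s => [|p s IH]; first by rewrite !big_nil lin0.
by rewrite !big_cons linD IH.
Qed.
End Lin.

Lemma linR_of (f : H -> R) : (forall x y, f (x + y) = f x + f y) ->
  (forall a x, f (a *: x) = a * f x) -> linR f.
Proof. by move=> hD hZ a x y; rewrite hD hZ. Qed.

Lemma eps_linR : linR eps. Proof. exact: eps_lin. Qed.

Lemma conv_lin a b : linR a -> linR b -> linR (conv a b).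
Proof.
move=> la lb c x y; rewrite /hconv (cop_lin hA c x y la lb).
rewrite /pair2 big_cat big_map /= mulr_sumr; congr (_ + _).
by apply: eq_bigr => p _; rewrite (linZ la) mulrA.
Qed.

Lemma conv_assoc a b c : linR a -> linR b -> linR c ->
  conv (conv a b) c = conv a (conv b c).
Proof.
move=> la lb lc; apply: funext => h; rewrite /hconv /pair2.
by have := cop_coassoc hA h la lb lc; rewrite /pair2 => ->.
Qed.

Lemma conv_epsl a : linR a -> conv eps a = a.
Proof.
move=> la; apply: funext => h; rewrite /hconv /pair2.
rewrite -{2}(counit_l hA h) (lin_sum la); apply: eq_bigr => p _.
by rewrite (linZ la).
Qed.

Lemma conv_epsr a : linR a -> conv a eps = a.
Proof.
move=> la; apply: funext => h; rewrite /hconv /pair2.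
rewrite -{2}(counit_r hA h) (lin_sum la); apply: eq_bigr => p _.
by rewrite (linZ la) mulrC.
Qed.

Lemma inv_lin a : linR a -> linR (char_inv hA a).
Proof. move=> la c x y; by rewrite /char_inv antipode_lin la. Qed.

Lemma conv_invl a : is_char a -> conv (char_inv hA a) a = eps.
Proof.
move=> [la [am a1]]; apply: funext => h; rewrite /hconv /pair2 /char_inv.
under eq_bigr do rewrite -am.
by rewrite -(lin_sum la) antipode_l (linZ la) a1 mulr1.
Qed.

Lemma conv_invr a : is_char a -> conv a (char_inv hA a) = eps.
Proof.
move=> [la [am a1]]; apply: funext => h; rewrite /hconv /pair2 /char_inv.
under eq_bigr do rewrite -am.
by rewrite -(lin_sum la) antipode_r (linZ la) a1 mulr1.
Qed.

Lemma char_idem a : is_char a -> conv a a = a -> a = eps.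
Proof.
move=> ca e; have la := ca.1.
have h : conv (conv (char_inv hA a) a) a = conv (char_inv hA a) a.
  by rewrite (conv_assoc (inv_lin la) la la) e.
by move: h; rewrite conv_invl // conv_epsl.
Qed.


Lemma linR_mulr (g : H -> R) y : linR g -> linR (fun a => g (a * y)).
Proof. move=> lg c a b; by rewrite mulrDl -scalerAl lg. Qed.
Lemma linR_mull (g : H -> R) x : linR g -> linR (fun a => g (x * a)).
Proof. move=> lg c a b; by rewrite mulrDr -scalerAr lg. Qed.
Lemma linR_mulc (g : H -> R) c : linR g -> linR (fun a => g a * c).
Proof. move=> lg k a b; by rewrite lg mulrDl mulrA. Qed.
Lemma linR_cmul (g : H -> R) c : linR g -> linR (fun a => c * g a).
Proof. move=> lg k a b; by rewrite lg mulrDr mulrCA. Qed.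
Lemma linR_sub (f g : H -> R) : linR f -> linR g -> linR (fun a => f a - g a).
Proof. move=> lf lg k a b; rewrite lf lg; ring. Qed.
Lemma linR_add (f g : H -> R) : linR f -> linR g -> linR (fun a => f a + g a).
Proof. move=> lf lg k a b; rewrite lf lg; ring. Qed.

Lemma infchar1 e : is_infchar hA e -> e 1 = 0.
Proof.
move=> [le em]; have := em 1 1; rewrite mulr1 (eps_one hA) mulr1 mul1r.
move=> h; apply: (addrI (e 1)); by rewrite addr0 -h.
Qed.

Lemma infchar_grade0 e x : is_infchar hA e -> grade hA 0 x -> e x = 0.
Proof.
move=> ie; rewrite (grade_connected hA) => -[a _ <-].
by rewrite (linZ ie.1) infchar1 // mulr0.
Qed.

Lemma conv_mul (f g : H -> R) x y : linR f -> linR g ->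
  conv f g (x * y) = \sum_(p <- cop x) \sum_(q <- cop y) f (p.1 * q.1) * g (p.2 * q.2).
Proof.
move=> lf lg; rewrite /hconv (cop_mul hA x y lf lg) /pair2.
by rewrite (big_allpairs_dep (h := fun p q => (p.1 * q.1, p.2 * q.2))).
Qed.

Lemma conv_grade (f g : H -> R) n x : linR f -> linR g -> grade hA n x ->
  exists s : seq (nat * (H * H)),
    conv f g x = \sum_(q <- s) f q.2.1 * g q.2.2 /\
    (forall q, q \in s -> (q.1 <= n)%N /\ grade hA q.1 q.2.1 /\ grade hA (n - q.1) q.2.2).
Proof.
move=> lf lg gx; have [s [st sg]] := grade_cop gx.
exists s; split => //; rewrite /hconv (st f g lf lg) /pair2 big_map //.
Qed.

Section ODE.
Variable T : R.
Hypothesis hT : 0 < T.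
Local Notation I := (inI T).
Local Notation hd := (has_deriv_on T).

Variables (gam eta : R -> H -> R).
Hypothesis glin : forall t, I t -> linR (gam t).
Hypothesis g0 : gam 0 = eps.
Hypothesis eic : forall t, I t -> is_infchar hA (eta t).
Hypothesis gder : forall t h, I t -> hd (fun u => gam u h) t (conv (gam t) (eta t) h).

Lemma I0 : I 0.
Proof. by apply/andP; split => //; exact: ltW. Qed.

Lemma gam1 t : I t -> gam t 1 = 1.
Proof.
move=> It; have -> : 1 = gam 0 1 by rewrite g0 (eps_one hA).
apply: (@hd0_const R T (fun u => gam u 1)) => // x Ix.
have := @gder x 1 Ix; congr hd.
rewrite /hconv (cop_one hA (glin Ix) (eic Ix).1) /pair2 big_seq1 /=.
by rewrite (infchar1 (eic Ix)) mulr0.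
Qed.

Definition Dm t x y := gam t (x * y) - gam t x * gam t y.

Lemma Dm_deriv t x y : I t ->
  hd (fun u => Dm u x y) t
     (\sum_(p <- cop x) eta t p.2 * Dm t p.1 y + \sum_(q <- cop y) eta t q.2 * Dm t x q.1).
Proof.
move=> It.
have H1 := @gder t (x * y) It.
have H2 := hd_mul (@gder t x It) (@gder t y It).
have := hd_add H1 (hd_opp H2); congr hd.
have [le em] := eic It; have lg := glin It.
rewrite (conv_mul _ _ lg le).
under eq_bigr do under eq_bigr do rewrite em mulrDr.
rewrite /Dm; under eq_bigr do rewrite big_split /=.
rewrite big_split /=.
have E1 : \sum_(p <- cop x) \sum_(q <- cop y) gam t (p.1 * q.1) * (eta t p.2 * eps q.2)
   = \sum_(p <- cop x) eta t p.2 * gam t (p.1 * y).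
  apply: eq_bigr => p _.
  rewrite -{2}(counit_r hA y) mulr_sumr (lin_sum lg) mulr_sumr.
  apply: eq_bigr => q _; rewrite -(scalerAr (eps q.2) p.1 q.1) (linZ lg); ring.
have E2 : \sum_(p <- cop x) \sum_(q <- cop y) gam t (p.1 * q.1) * (eps p.2 * eta t q.2)
   = \sum_(q <- cop y) eta t q.2 * gam t (x * q.1).
  rewrite exchange_big; apply: eq_bigr => q _.
  rewrite -{2}(counit_r hA x) mulr_suml (lin_sum lg) mulr_sumr.
  apply: eq_bigr => p _; rewrite -scalerAl (linZ lg); ring.
rewrite E1 E2 /hconv /pair2 mulr_suml mulr_sumr.
have R1 : \sum_(p <- cop x) eta t p.2 * (gam t (p.1 * y) - gam t p.1 * gam t y) =
   \sum_(p <- cop x) eta t p.2 * gam t (p.1 * y) - \sum_(p <- cop x) gam t p.1 * eta t p.2 * gam t y.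
  by rewrite -sumrB; apply: eq_bigr => p _; ring.
have R2 : \sum_(q <- cop y) eta t q.2 * (gam t (x * q.1) - gam t x * gam t q.1) =
   \sum_(q <- cop y) eta t q.2 * gam t (x * q.1) - \sum_(q <- cop y) gam t x * (gam t q.1 * eta t q.2).
  by rewrite -sumrB; apply: eq_bigr => p _; ring.
rewrite R1 R2; ring.
Qed.

Lemma Dm_lin1 t y : I t -> linR (fun a => Dm t a y).
Proof. move=> It; apply: linR_sub; [exact: linR_mulr (glin It) | exact: linR_mulc (glin It)]. Qed.
Lemma Dm_lin2 t x : I t -> linR (fun a => Dm t x a).
Proof.
move=> It; rewrite /Dm; apply: linR_sub; first exact: linR_mull (glin It).
exact: linR_cmul (glin It).
Qed.

Lemma Dm_grade N : forall n m x y, (n + m < N)%N -> grade hA n x -> grade hA m y ->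
  forall t, I t -> Dm t x y = 0.
Proof.
elim: N => [//|N IH] n m x y nmN gx gy.
have hd0 : forall t, I t -> hd (fun u => Dm u x y) t 0.
  move=> t It; have := @Dm_deriv t x y It; congr hd.
  have [s1 [E1 S1]] := conv_grade (@Dm_lin1 t y It) (eic It).1 gx.
  have [s2 [E2 S2]] := conv_grade (@Dm_lin2 t x It) (eic It).1 gy.
  have C1 : \sum_(p <- cop x) eta t p.2 * Dm t p.1 y = conv (fun a => Dm t a y) (eta t) x.
    by rewrite /hconv /pair2; apply: eq_bigr => p _; rewrite mulrC.
  have C2 : \sum_(p <- cop y) eta t p.2 * Dm t x p.1 = conv (fun a => Dm t x a) (eta t) y.
    by rewrite /hconv /pair2; apply: eq_bigr => p _; rewrite mulrC.
  rewrite C1 C2 E1 E2 !big1_seq ?addr0 // => q /andP[_ qs].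
  + have [q1 [gq1 gq2]] := S2 q qs.
    have [qe|qlt] := eqVneq q.1 m.
      have g0' : grade hA 0 q.2.2 by move: gq2; rewrite qe subnn.
      by rewrite (infchar_grade0 (eic It) g0') mulr0.
    rewrite (IH n q.1) ?mul0r //.
    have : (q.1 < m)%N by rewrite ltn_neqAle qlt q1.
    move: nmN; rewrite ltnS; lia.
  + have [q1 [gq1 gq2]] := S1 q qs.
    have [qe|qlt] := eqVneq q.1 n.
      have g0' : grade hA 0 q.2.2 by move: gq2; rewrite qe subnn.
      by rewrite (infchar_grade0 (eic It) g0') mulr0.
    rewrite (IH q.1 m) ?mul0r //.
    have : (q.1 < n)%N by rewrite ltn_neqAle qlt q1.
    move: nmN; rewrite ltnS; lia.
move=> t It; rewrite (@hd0_const R T (fun u => Dm u x y) hd0 t It).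
by rewrite /Dm g0 (eps_mul hA) subrr.
Qed.

Lemma Dm0 t x y : I t -> Dm t x y = 0.
Proof.
move=> It; have lg := glin It.
have [N [c [gc ->]]] := grade_span hA x; have [M [d [gd ->]]] := grade_span hA y.
rewrite /Dm big_distrl /= !(lin_sum lg) big_distrl /= -sumrB big1 // => i _.
rewrite big_distrr /= (lin_sum lg) big_distrr /= -sumrB big1 // => j _.
exact: (@Dm_grade (i + j).+1 i j).
Qed.

Lemma ode_char t : I t -> is_char (gam t).
Proof.
move=> It; split; first exact: glin.
split; last exact: gam1.
by move=> x y; apply/eqP; rewrite -subr_eq0; apply/eqP; exact: Dm0.
Qed.

End ODE.


Section Deriv.
Variable T : R.
Hypothesis hT : 0 < T.
Local Notation I := (inI T).
Local Notation hd := (has_deriv_on T).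

Lemma deriv_infchar (C : R -> H -> R) t (d : H -> R) : I t ->
  (forall u, I u -> is_char (C u)) -> C t = eps ->
  (forall h, hd (fun u => C u h) t (d h)) -> is_infchar hA d.
Proof.
move=> It Cc Ct Hd; split.
- move=> a x y.
  have H1 := hd_add (hd_scal (c:=a) (Hd x)) (Hd y).
  have H2 : hd (fun u => C u (a *: x + y)) t (a * d x + d y).
    apply: hd_ext H1 => // u Iu; by rewrite (Cc u Iu).1.
  exact: (hd_unique hT It (Hd _) H2).
- move=> x y.
  have H1 := hd_mul (Hd x) (Hd y).
  have H2 : hd (fun u => C u (x * y)) t (d x * C t y + C t x * d y).
    apply: hd_ext H1 => // u Iu; by rewrite (Cc u Iu).2.1.
  rewrite (hd_unique hT It (Hd _) H2) Ct; ring.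
Qed.

Lemma conv_deriv (A B : R -> H -> R) (a b : H -> R) t h :
  A t = eps -> B t = eps -> linR a -> linR b ->
  (forall k, hd (fun u => A u k) t (a k)) -> (forall k, hd (fun u => B u k) t (b k)) ->
  hd (fun u => conv (A u) (B u) h) t (a h + b h).
Proof.
move=> At Bt la lb Ha Hb.
have := hd_sum (s:=cop h) (fun p => hd_mul (Ha p.1) (Hb p.2)).
congr hd; rewrite big_split /= At Bt.
have e1 := congr1 (fun f => f h) (conv_epsr la).
have e2 := congr1 (fun f => f h) (conv_epsl lb).
by rewrite /hconv /pair2 /= in e1 e2; rewrite e1 e2.
Qed.

Lemma small_o_hd s f : f s = 0 -> (small_o T s f <-> hd f s 0).
Proof.
move=> fs; rewrite /small_o /has_deriv_on !wIP.
have E y : `|0 - f y / `|y - s| | = `|0 - (f y - f s) / (y - s)|.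
  by rewrite fs subr0 !sub0r !normrN !normrM !normfV normr_id.
split => Hc e e0; have [d d0 Hd] := Hc e e0; exists d => // y Iy ys sy.
- rewrite -E; exact: Hd.
- rewrite E; exact: Hd.
Qed.

End Deriv.

End Hopf.


Section Main.
Variables (R : realType) (H : comAlgType R) (hA : cgHopf H) (T : R).
Hypothesis hT : 0 < T.
Local Notation I := (inI T).
Local Notation hd := (has_deriv_on T).
Local Notation cop := (cop hA).
Local Notation eps := (eps hA).
Local Notation conv := (hconv hA).
Local Notation inv := (char_inv hA).

Section Srm.
Variable X : R -> R -> H -> R.
Hypothesis sX : is_srm hA T X.

Lemma Xchar s t : I s -> I t -> is_char (X s t).
Proof. exact: sX.2.1. Qed.
Lemma Xlin s t : I s -> I t -> linR (X s t).
Proof. by move=> Is It; case: (Xchar Is It). Qed.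
Lemma Xchen s u t : I s -> I u -> I t -> conv (X s u) (X u t) = X s t.
Proof. exact: sX.2.2.1. Qed.
Lemma Xdiag s : I s -> X s s = eps.
Proof. move=> Is; apply: char_idem (Xchar Is Is) _; exact: Xchen. Qed.
Lemma Xinv u s t : I u -> I s -> I t -> X s t = conv (inv (X u s)) (X u t).
Proof.
move=> Iu Is It; rewrite -(Xchen Iu Is It).
rewrite -(conv_assoc hA (inv_lin hA (Xlin Iu Is)) (Xlin Iu Is) (Xlin Is It)).
by rewrite conv_invl ?conv_epsl //; [exact: Xlin | exact: Xchar].
Qed.
Lemma XSm s h : I s -> Smooth T (fun t => X s t h).
Proof. by move=> Is; apply/(smooth_onP hT); exact: sX.2.2.2. Qed.
Definition dXd s := fun h => Dv T (fun u => X s u h) s.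
Lemma dXd_hd s h : I s -> hd (fun u => X s u h) s (dXd s h).
Proof. move=> Is; exact: (@XSm s h Is 0%N s Is). Qed.
Lemma dXd_inf s : I s -> is_infchar hA (dXd s).
Proof.
move=> Is; apply: (deriv_infchar (C := X s) hT Is) => //.
- by move=> u Iu; exact: Xchar.
- exact: Xdiag.
- by move=> h; exact: dXd_hd.
Qed.

Definition dXb t := conv (inv (X 0 t)) (fun k => Dv T (fun u => X 0 u k) t).

Lemma dXb_hd t h : I t -> hd (fun u => X t u h) t (dXb t h).
Proof.
move=> It; have I0 := I0 hT.
have Hs := hd_sum (s := cop h)
  (fun p => hd_scal (c := inv (X 0 t) p.1) (@XSm 0 p.2 I0 0%N t It)).
apply: (hd_ext (g := fun u => X t u h) It _ Hs) => u Iu.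
by rewrite (Xinv I0 It Iu).
Qed.

Lemma dXb_inf t : I t -> is_infchar hA (dXb t).
Proof.
move=> It; apply: (deriv_infchar (C := X t) hT It).
- by move=> u Iu; exact: Xchar.
- exact: Xdiag.
- by move=> h; exact: dXb_hd.
Qed.

Lemma dXb_Ck k h : Ck T k (fun t => dXb t h).
Proof.
have I0 := I0 hT.
apply: (Ck_sum hT) => p; apply: (Ck_mul hT).
- exact: ((SmoothP T _).1 (@XSm 0 (antipode hA p.1) I0) k).
- exact: ((SmoothP T _).1 (Smooth_Dv (@XSm 0 p.2 I0)) k).
Qed.

End Srm.


Variables X Y : R -> R -> H -> R.
Hypothesis sX : is_srm hA T X.
Hypothesis sY : is_srm hA T Y.

Lemma fwd (Z : R -> R -> H -> R) :
  (forall s t, I s -> I t -> is_char (Z s t)) ->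
  is_boxplus hA T X Y Z ->
  ((forall s u t, I s -> I u -> I t -> Z s t = conv (Z s u) (Z u t)) /\
   (forall s, I s -> exists Rm : R -> H -> R,
      (forall t, I t -> linR (Rm t) /\
         Z s t = (fun h => conv (X s t) (Y s t) h + Rm t h)) /\
      (forall x, small_o T s (fun t => Rm t x)))).
Proof.
move=> Zc [dX [dY [gam [HdX [HdY [[glin [g0 [gsm gder]]] HZ]]]]]].
have dXi t : I t -> is_infchar hA (dX t).
  move=> It; apply: (deriv_infchar (C := X t) hT It).
  - by move=> u Iu; exact: (Xchar sX It Iu).
  - exact: (Xdiag sX It).
  - by move=> h; exact: HdX.
have dYi t : I t -> is_infchar hA (dY t).
  move=> It; apply: (deriv_infchar (C := Y t) hT It).
  - by move=> u Iu; exact: (Xchar sY It Iu).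
  - exact: (Xdiag sY It).
  - by move=> h; exact: HdY.
have etai t : I t -> is_infchar hA (fun h => dX t h + dY t h).
  move=> It; split; first exact: linR_add (dXi t It).1 (dYi t It).1.
  by move=> x y; rewrite (dXi t It).2 (dYi t It).2; ring.
have gc := ode_char hT glin g0 etai gder.
have gl t : I t -> linR (gam t) by move=> It; exact: (gc t It).1.
split.
  move=> s u t Is Iu It; rewrite !HZ //.
  rewrite (conv_assoc hA (inv_lin hA (gl s Is)) (gl u Iu)); last first.
    exact: conv_lin (inv_lin hA (gl u Iu)) (gl t It).
  rewrite -(conv_assoc hA (gl u Iu) (inv_lin hA (gl u Iu)) (gl t It)).
  by rewrite (conv_invr hA (gc u Iu)) (conv_epsl hA (gl t It)).
move=> s Is; exists (fun t h => Z s t h - conv (X s t) (Y s t) h); split.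
  move=> t It; split.
    apply: linR_sub; first exact: (Zc s t Is It).1.
    exact: conv_lin (Xlin sX Is It) (Xlin sY Is It).
  by apply: funext => h; rewrite addrC subrK.
move=> x; apply/(small_o_hd T).
  by rewrite (HZ s s Is Is) (conv_invl hA (gc s Is)) (Xdiag sX Is) (Xdiag sY Is) (conv_epsl hA (eps_lin hA)) subrr.
have H1 : hd (fun u => Z s u x) s (dX s x + dY s x).
  have := hd_sum (s := cop x)
    (fun p => hd_scal (c := inv (gam s) p.1) (gder s p.2 Is)).
  move=> Hs.
  have Hs' := hd_ext (g := fun u => Z s u x) Is (fun u Iu => esym (congr1 (fun f => f x) (HZ s u Is Iu))) Hs.
  suff <- : \sum_(p <- cop x) inv (gam s) p.1 * conv (gam s) (fun h0 : H => dX s h0 + dY s h0) p.2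
     = dX s x + dY s x by [].
  have e := congr1 (fun f => f x) (conv_assoc hA (inv_lin hA (gl s Is)) (gl s Is) (etai s Is).1).
  rewrite /= in e; rewrite -[LHS]/(conv (inv (gam s)) (conv (gam s) (fun h0 : H => dX s h0 + dY s h0)) x).
  by rewrite -e (conv_invl hA (gc s Is)) (conv_epsl hA (etai s Is).1).
have H2 : hd (fun u => conv (X s u) (Y s u) x) s (dX s x + dY s x).
  apply: conv_deriv; [exact: (Xdiag sX Is) | exact: (Xdiag sY Is) | exact: (dXi s Is).1 | exact: (dYi s Is).1 | |].
  - by move=> k; exact: HdX.
  - by move=> k; exact: HdY.
have := hd_add H1 (hd_opp H2); rewrite subrr.
done.
Qed.



Lemma bwd (Z : R -> R -> H -> R) :
  (forall s t, I s -> I t -> is_char (Z s t)) ->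
  ((forall s u t, I s -> I u -> I t -> Z s t = conv (Z s u) (Z u t)) /\
   (forall s, I s -> exists Rm : R -> H -> R,
      (forall t, I t -> linR (Rm t) /\
         Z s t = (fun h => conv (X s t) (Y s t) h + Rm t h)) /\
      (forall x, small_o T s (fun t => Rm t x)))) ->
  is_boxplus hA T X Y Z.
Proof.
move=> Zc [Zchen Zapp].
have I0 := I0 hT.
have Zl s t : I s -> I t -> linR (Z s t) by move=> Is It; exact: (Zc s t Is It).1.
have Zd t : I t -> Z t t = eps.
  move=> It; apply: char_idem (Zc t t It It) _; exact: esym (Zchen t t t It It It).
have Zder t h : I t -> hd (fun u => Z 0 u h) t
     (conv (Z 0 t) (fun k => dXb X t k + dXb Y t k) h).
  move=> It; have [Rm [HR HRo]] := Zapp t It.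
  have Rt k : Rm t k = 0.
    have := congr1 (fun f => f k) (HR t It).2.
    rewrite (Zd t It) (Xdiag sX It) (Xdiag sY It) (conv_epsl hA (eps_lin hA)) /=.
    by move=> e; apply: (addrI (eps k)); rewrite addr0 -e.
  have HRd k : hd (fun u => Rm u k) t 0.
    by apply/(small_o_hd T (Rt k)); exact: HRo.
  have HXY k : hd (fun u => conv (X t u) (Y t u) k) t (dXb X t k + dXb Y t k).
    apply: conv_deriv; [exact: (Xdiag sX It) | exact: (Xdiag sY It)
      | exact: (dXb_inf sX It).1 | exact: (dXb_inf sY It).1 | |].
    - by move=> k'; exact: dXb_hd.
    - by move=> k'; exact: dXb_hd.
  have Hs := hd_sum (s := cop h)
    (fun p => hd_scal (c := Z 0 t p.1) (hd_add (HXY p.2) (HRd p.2))).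
  have Hs' := hd_ext (g := fun u => Z 0 u h) It (fun u Iu =>
     esym (congr1 (fun f => f h)
       (etrans (Zchen 0 t u I0 It Iu) (congr1 (fun g => conv (Z 0 t) g) (HR u Iu).2)))) Hs.
  move: Hs'; congr hd.
  by rewrite /hconv /pair2; apply: eq_bigr => p _; rewrite addr0.
exists (dXb X), (dXb Y), (Z 0); split; first by move=> t h It; exact: dXb_hd.
split; first by move=> t h It; exact: dXb_hd.
split; last first.
  move=> s t Is It; rewrite (Zchen 0 s t I0 Is It).
  rewrite -(conv_assoc hA (inv_lin hA (Zl 0 s I0 Is)) (Zl 0 s I0 Is) (Zl s t Is It)).
  by rewrite (conv_invl hA (Zc 0 s I0 Is)) (conv_epsl hA (Zl s t Is It)).
split; first by move=> t It; exact: Zl.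
split; first exact: Zd.
split; last by move=> t h It; exact: Zder.
move=> h; apply/(smooth_onP hT).
apply: (bootstrap hT (fam := fun h t => Z 0 t h)
   (G := fun h t => conv (Z 0 t) (fun k => dXb X t k + dXb Y t k) h)).
  by move=> a x Ix; exact: Zder.
move=> k IH a; apply: (Ck_sum hT) => p; apply: (Ck_mul hT); first exact: IH.
apply: (Ck_add hT); exact: dXb_Ck.
Qed.

Lemma hd_eqv f x a b : a = b -> hd f x a -> hd f x b.
Proof. by move=> ->. Qed.

Lemma more s : I s -> exists r r' : R -> H -> R,
     (forall t, I t ->
        linR (r t) /\ linR (r' t) /\
        conv (X s t) (Y s t) = (fun h => conv (Y s t) (X s t) h + r t h) /\
        conv (X s t) (Y s t) = (fun h => X s t h + Y s t h - eps h + r' t h)) /\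
     (forall x, small_o T s (fun t => r t x) /\ small_o T s (fun t => r' t x)).
Proof.
move=> Is.
exists (fun t h => conv (X s t) (Y s t) h - conv (Y s t) (X s t) h).
exists (fun t h => conv (X s t) (Y s t) h - (X s t h + Y s t h - eps h)).
split.
  move=> t It; split.
    apply: linR_sub; apply: conv_lin; exact: Xlin.
  split.
    apply: linR_sub; first by apply: conv_lin; exact: Xlin.
    apply: linR_sub; last exact: eps_lin.
    by apply: linR_add; exact: Xlin.
  split; by apply: funext => h; rewrite addrC subrK.
have lX := (dXd_inf sX Is).1; have lY := (dXd_inf sY Is).1.
move=> x; split.
- apply/(small_o_hd T).
    by rewrite (Xdiag sX Is) (Xdiag sY Is) subrr.
  have H1 : hd (fun u => conv (X s u) (Y s u) x) s (dXd X s x + dXd Y s x).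
    apply: conv_deriv; [exact: (Xdiag sX Is) | exact: (Xdiag sY Is) | exact: lX | exact: lY | |].
    - by move=> k; exact: dXd_hd.
    - by move=> k; exact: dXd_hd.
  have H2 : hd (fun u => conv (Y s u) (X s u) x) s (dXd Y s x + dXd X s x).
    apply: conv_deriv; [exact: (Xdiag sY Is) | exact: (Xdiag sX Is) | exact: lY | exact: lX | |].
    - by move=> k; exact: dXd_hd.
    - by move=> k; exact: dXd_hd.
  apply: hd_eqv (hd_add H1 (hd_opp H2)); ring.
- apply/(small_o_hd T).
    by rewrite (Xdiag sX Is) (Xdiag sY Is) (conv_epsl hA (eps_lin hA)) addrK subrr.
  have H1 : hd (fun u => conv (X s u) (Y s u) x) s (dXd X s x + dXd Y s x).
    apply: conv_deriv; [exact: (Xdiag sX Is) | exact: (Xdiag sY Is) | exact: lX | exact: lY | |].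
    - by move=> k; exact: dXd_hd.
    - by move=> k; exact: dXd_hd.
  have H2 := hd_add (hd_add (@dXd_hd X sX s x Is) (@dXd_hd Y sY s x Is)) (hd_opp (hd_cst T (eps x) s)).
  apply: hd_eqv (hd_add H1 (hd_opp H2)); ring.
Qed.

End Main.

Theorem proposition4p16 (R : realType) (H : comAlgType R) (hA : cgHopf H)
  (T : R) (X Y : R -> R -> H -> R) :
  0 < T -> is_srm hA T X -> is_srm hA T Y ->
  (forall Z : R -> R -> H -> R,
     (forall s t, inI T s -> inI T t -> is_char (Z s t)) ->
     (is_boxplus hA T X Y Z <->
      ((forall s u t, inI T s -> inI T u -> inI T t ->
          Z s t = hconv hA (Z s u) (Z u t)) /\
       (forall s, inI T s -> exists Rm : R -> H -> R,
          (forall t, inI T t -> linR (Rm t) /\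
             Z s t = (fun h => hconv hA (X s t) (Y s t) h + Rm t h)) /\
          (forall x, small_o T s (fun t => Rm t x)))))) /\
  (forall s, inI T s -> exists r r' : R -> H -> R,
     (forall t, inI T t ->
        linR (r t) /\ linR (r' t) /\
        hconv hA (X s t) (Y s t) = (fun h => hconv hA (Y s t) (X s t) h + r t h) /\
        hconv hA (X s t) (Y s t) = (fun h => X s t h + Y s t h - eps hA h + r' t h)) /\
     (forall x, small_o T s (fun t => r t x) /\ small_o T s (fun t => r' t x))).
Proof.
move=> hT sX sY; split.
  move=> Z Zc; split; [exact: (fwd hT sX sY Zc) | exact: (bwd hT sX sY Zc)].
move=> s Is; exact: (more hT sX sY Is).
Qed.
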